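(* Let $A,B$ be RLE strings of encoded length $n$, let $\tilde d$ be a positive integer, and let $(i_A,i_B)\in[n]\times[n]$. Then $(i_A,i_B)$ is a $\tilde d$-witness pair if and only if there exists a common generalized substring $s$ of $A$ and $B$ with $|\tilde s|=\tilde d$ and $|s|<n^{1/3}$, having an occurrence in $\tilde A$ starting within the run $A[i_A]$ and an occurrence in $\tilde B$ starting within the run $B[i_B]$, such that the occurrence in the string whose run is shorter (in $\tilde A$ if $R(A[i_A])\le R(B[i_B])$, in $\tilde B$ if $R(B[i_B])\le R(A[i_A])$) starts at the first character of that run.
   Context: A string $\tilde s$ has run-length encoding (RLE) $s=s[1]\cdots s[m]$, the sequence of its maximal runs of identical characters; $|s|=m$ is the encoded length, $|\tilde s|$ the decoded length; $C(s[i])$ and $R(s[i])$ are the character and length of run $s[i]$. An RLE string $t$ is a generalized substring of $s$ if $\tilde t$ is a substring of $\tilde s$. A pair $(i_A,i_B)\in[n]\times[n]$ is a $\tilde d$-witness pair iff there is a common generalized substring $s$ of $A$ and $B$ with $|\tilde s|\ge\tilde d$ and $|s|<n^{1/3}$ such that an occurrence of $\tilde s$ in $\tilde A$ has its first character in the run $A[i_A]$ and an occurrence in $\tilde B$ has its first character in the run $B[i_B]$. *)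

(* Defs.v *)
From mathcomp Require Import all_boot.
Set Implicit Arguments. Unset Strict Implicit. Unset Printing Implicit Defensive.

(* An RLE string over an alphabet T: a sequence of runs (character, length). *)
Definition rle (T : eqType) := seq (T * nat).

Section RLE.
Variable T : eqType.

Definition C (r : T * nat) : T := r.1.
Definition R (r : T * nat) : nat := r.2.

(* A valid RLE: runs are nonempty and maximal (adjacent runs carry different
   characters). *)
Definition is_rle (s : rle T) : bool :=
  all (fun r => 0 < R r) s && sorted (fun r1 r2 => C r1 != C r2) s.

Definition decode (s : rle T) : seq T := flatten [seq nseq (R r) (C r) | r <- s].

(* R(s[i]) for the 0-based run index i (0 if out of range). *)
Definition run_len (s : rle T) (i : nat) : nat := nth 0 (map R s) i.

(* 0-based position in ~s of the first character of run s[i] (0-based i). *)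
Definition run_start (s : rle T) (i : nat) : nat := sumn (map R (take i s)).

Definition occurs_at (w x : seq T) (p : nat) : bool :=
  (p + size w <= size x) && (take (size w) (drop p x) == w).

Definition in_run (A : rle T) (i p : nat) : bool :=
  (run_start A i <= p) && (p < run_start A i + run_len A i).

(* (iA, iB) is a dt-witness pair (n = encoded length; |s| < n^(1/3) is
   written as |s|^3 < n, equivalent for natural |s|). *)
Definition witness_pair (A B : rle T) (n dt iA iB : nat) : Prop :=
  exists s : rle T,
    [/\ is_rle s, dt <= size (decode s), size s ^ 3 < n,
        exists pA, occurs_at (decode s) (decode A) pA && in_run A iA pA
      & exists pB, occurs_at (decode s) (decode B) pB && in_run B iB pB].

End RLE.

(* Main.v *)
Require Import Defs.
From mathcomp Require Import all_boot zify.
Set Implicit Arguments. Unset Strict Implicit.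

Ltac nlia := repeat match goal with
  | H : is_true (occurs_at _ _ _) |- _ => clear H
  | H : forall _, _ |- _ => clear H
  | H : is_true (is_rle _) |- _ => clear H
  | H : is_true (sorted _ _) |- _ => clear H
  | H : is_true (path _ _ _) |- _ => clear H
  | H : is_true (all _ _) |- _ => clear H
  end; lia.

Section H.
Variable T : eqType.
Implicit Types (s A X : rle T) (w : seq T).

Lemma decode_cons (r : T * nat) s : decode (r :: s) = nseq (R r) (C r) ++ decode s.
Proof. by []. Qed.

Lemma decode_cat s1 s2 : decode (s1 ++ s2) = decode s1 ++ decode s2.
Proof. by rewrite /decode map_cat flatten_cat. Qed.

Lemma size_decode s : size (decode s) = sumn (map (@R T) s).
Proof. by elim: s => //= r s IH; rewrite decode_cons size_cat size_nseq IH. Qed.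

Lemma run_start_eq A i : run_start A i = size (decode (take i A)).
Proof. by rewrite size_decode. Qed.

Lemma decomp (r0 : T * nat) A i : i < size A ->
  decode A = decode (take i A) ++ nseq (run_len A i) (C (nth r0 A i)) ++ decode (drop i.+1 A).
Proof.
move=> Hi; rewrite -{1}(cat_take_drop i A) decode_cat (drop_nth r0) //.
by rewrite decode_cons /run_len (nth_map r0).
Qed.

Lemma occP (x0 : T) w (x : seq T) p : occurs_at w x p <->
  (p + size w <= size x /\ forall j, j < size w -> nth x0 x (p + j) = nth x0 w j).
Proof.
rewrite /occurs_at; split.
- case/andP=> H /eqP E; split=> // j Hj.
  by rewrite -[in RHS]E nth_take // nth_drop.
- case=> H E; rewrite H /=; apply/eqP/(eq_from_nth (x0:=x0)).
  + rewrite size_takel // size_drop; lia.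
  + move=> j; rewrite size_takel ?size_drop; last lia.
    by move=> Hj; rewrite nth_take // nth_drop E.
Qed.

Lemma occ_take (x0 : T) d w (x : seq T) p : occurs_at w x p -> occurs_at (take d w) x p.
Proof.
move/(occP x0)=> [H E]; apply/(occP x0); split.
  rewrite size_take_min; lia.
move=> j; rewrite size_take_min => Hj; rewrite nth_take; last lia.
apply: E; lia.
Qed.

Lemma occ_suffix (x0 : T) (u v : seq T) (x : seq T) p : occurs_at (u ++ v) x p -> occurs_at v x (p + size u).
Proof.
move/(occP x0)=> [H E]; apply/(occP x0); split.
  rewrite size_cat in H; lia.
move=> j Hj; rewrite -addnA E ?size_cat; last lia.
by rewrite nth_cat ltnNge leq_addr /= addKn.
Qed.

Lemma occ_nil (x : seq T) p : occurs_at [::] x p = (p <= size x).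
Proof. by rewrite /occurs_at addn0 take0 eqxx andbT. Qed.

Lemma in_run_nth (x0 : T) (r0 : T * nat) A i p : i < size A -> in_run A i p ->
  nth x0 (decode A) p = C (nth r0 A i).
Proof.
move=> Hi /andP[H1 H2]; rewrite (decomp r0 Hi) nth_cat -run_start_eq ltnNge H1 /=.
rewrite nth_cat size_nseq ifT; last lia.
by rewrite nth_nseq ifT //; lia.
Qed.

Lemma end_le (r0 : T * nat) A i : i < size A -> run_start A i + run_len A i <= size (decode A).
Proof.
move=> Hi; rewrite (decomp r0 Hi) !size_cat size_nseq run_start_eq; lia.
Qed.

Lemma adj r0 (e : rel (T * nat)) A i : sorted e A -> i.+1 < size A ->
  e (nth r0 A i) (nth r0 A i.+1).
Proof.
case: A => [|a A'] //= Hs Hi.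
by move/(pathP r0): Hs => /(_ i Hi).
Qed.

Lemma end_neq (x0 : T) (r0 : T * nat) A i : is_rle A -> i < size A ->
  run_start A i + run_len A i < size (decode A) ->
  nth x0 (decode A) (run_start A i + run_len A i) != C (nth r0 A i).
Proof.
move=> /andP[Hpos Hs] Hi Hsz.
move: Hsz; rewrite (decomp r0 Hi) !size_cat size_nseq run_start_eq.
rewrite nth_cat -run_start_eq. rewrite ifF; last lia. rewrite addKn nth_cat size_nseq ltnn subnn.
case E: (drop i.+1 A) => [|r2 t]; first by rewrite /=; lia.
move=> _.
have Hr2 : r2 \in A by apply: (mem_drop (n0:=i.+1)); rewrite E mem_head.
have Hp : 0 < R r2 by move/allP: Hpos => /(_ _ Hr2).
rewrite decode_cons nth_cat size_nseq Hp nth_nseq Hp.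
have Hsi : i.+1 < size A.
  have : 0 < size (drop i.+1 A) by rewrite E.
  rewrite size_drop; lia.
have -> : r2 = nth r0 A i.+1 by rewrite -[i.+1]addn0 -nth_drop E.
by rewrite eq_sym; apply: (adj r0 Hs Hsi).
Qed.


Lemma occ_build (x0 : T) (r0 : T * nat) X i q m w : i < size X ->
  run_start X i <= q -> q + m <= run_start X i + run_len X i ->
  occurs_at w (decode X) (q + m) ->
  occurs_at (nseq m (C (nth r0 X i)) ++ w) (decode X) q.
Proof.
move=> Hi H1 H2 /(occP x0) [H3 E]; apply/(occP x0); split.
  rewrite size_cat size_nseq; lia.
move=> j; rewrite size_cat size_nseq => Hj.
rewrite nth_cat size_nseq; case: ifP => Hjm.
  rewrite nth_nseq Hjm; apply: in_run_nth => //; rewrite /in_run; apply/andP; split; lia.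
have -> : q + j = q + m + (j - m) by lia.
apply: E; lia.
Qed.

Lemma occ_first (r0 : T * nat) X i p (c : T) k w : is_rle X -> i < size X -> in_run X i p ->
  occurs_at (nseq k c ++ w) (decode X) p -> 0 < k ->
  [/\ c = C (nth r0 X i), p + k <= run_start X i + run_len X i &
      forall y w', w = y :: w' -> y != c -> p + k = run_start X i + run_len X i].
Proof.
move=> HX Hi Hin Hocc Hk.
have Hc : c = C (nth r0 X i).
  move/(occP c): Hocc => [_ E].
  have := E 0; rewrite size_cat size_nseq addn0 nth_cat size_nseq Hk nth_nseq Hk => <-; last lia.
  exact: (in_run_nth c r0 Hi Hin).
move/andP: (Hin) => [Hs He].
move/(occP c): (Hocc) => [Hsz E]; rewrite size_cat size_nseq in Hsz E.
have Hle : p + k <= run_start X i + run_len X i.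
  rewrite leqNgt; apply/negP => Hlt.
  have := end_neq c r0 HX Hi; rewrite -Hc.
  have -> : run_start X i + run_len X i = p + (run_start X i + run_len X i - p) by lia.
  rewrite E; last lia.
  rewrite nth_cat size_nseq ifT; last lia.
  rewrite nth_nseq ifT; last lia.
  by rewrite eqxx => /(_ ltac:(lia)).
split=> // y w' Ew Hy.
apply/eqP; rewrite eqn_leq Hle /= leqNgt; apply/negP => Hlt.
have Hin2 : in_run X i (p + k) by apply/andP; split; lia.
have := E k; rewrite nth_cat size_nseq ltnn subnn Ew /= (in_run_nth c r0 Hi Hin2) -Hc.
move=> H; move: Hy; rewrite -H ?eqxx //; lia.
Qed.


Lemma pos_nth (r0 : T * nat) A i : is_rle A -> i < size A -> 0 < run_len A i.
Proof.
case/andP=> Hpos _ Hi; rewrite /run_len (nth_map r0) //.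
by move/allP: Hpos; apply; rewrite mem_nth.
Qed.

Lemma decode_head (r : T * nat) t : 0 < R r ->
  decode (r :: t) = C r :: (nseq (R r).-1 (C r) ++ decode t).
Proof. by rewrite decode_cons; case: (R r). Qed.

Lemma decode_cons2 (c : T) k (rest : rle T) : decode ((c,k)::rest) = nseq k c ++ decode rest.
Proof. by []. Qed.


Lemma core (r0 : T * nat) A B iA iB (c : T) k (rest : rle T) pA pB :
 is_rle A -> is_rle B -> iA < size A -> iB < size B -> is_rle ((c,k)::rest) ->
 occurs_at (decode ((c,k)::rest)) (decode A) pA -> in_run A iA pA ->
 occurs_at (decode ((c,k)::rest)) (decode B) pB -> in_run B iB pB ->
 run_len A iA <= run_len B iB ->
 exists k', [/\ k <= k',
   occurs_at (decode ((c,k')::rest)) (decode A) (run_start A iA),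
   in_run A iA (run_start A iA) &
   exists pB', [/\ occurs_at (decode ((c,k')::rest)) (decode B) pB', in_run B iB pB' &
       (run_len B iB <= run_len A iA -> pB' = run_start B iB)]].
Proof.
move=> HA HB HiA HiB Hs OA InA OB InB Hlen.
move: (Hs) => /andP [Hpos Hsort].
have Hk : 0 < k by move: Hpos => /= /andP[].
rewrite decode_cons2 in OA OB.
have [HcA HleA HeqA] := occ_first r0 HA HiA InA OA Hk.
have [HcB HleB HeqB] := occ_first r0 HB HiB InB OB Hk.
have LA := pos_nth r0 HA HiA.
have LB := pos_nth r0 HB HiB.
move/andP: InA => [InA1 InA2]; move/andP: InB => [InB1 InB2].
case Er: rest => [|r2 t].
  exists k; split => //.
  - rewrite decode_cons2 HcA; apply: (occ_build c) => //; first nlia.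
    rewrite occ_nil; have := end_le r0 HiA; nlia.
  - by apply/andP; split; nlia.
  exists (run_start B iB); split.
  - rewrite decode_cons2 HcB; apply: (occ_build c) => //; first nlia.
    rewrite occ_nil; have := end_le r0 HiB; nlia.
  - by apply/andP; split; nlia.
  - by [].
have Hr2 : 0 < R r2 by move: Hpos; rewrite Er /= => /and3P[].
have Hne : C r2 != c by move: Hsort; rewrite Er /= eq_sym => /andP[].
move: HeqA HeqB; rewrite Er (decode_head t Hr2) => HeqA HeqB.
have EA := HeqA _ _ erefl Hne; have EB := HeqB _ _ erefl Hne.
have SA := occ_suffix c OA; have SB := occ_suffix c OB.
rewrite size_nseq Er (decode_head t Hr2) EA in SA.
rewrite size_nseq Er (decode_head t Hr2) EB in SB.
exists (run_len A iA); split.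
- nlia.
- rewrite decode_cons2 (decode_head t Hr2) HcA; apply: (occ_build c) => //; nlia.
- by apply/andP; split; nlia.
exists (run_start B iB + run_len B iB - run_len A iA); split.
- rewrite decode_cons2 (decode_head t Hr2) HcB; apply: (occ_build c) => //; try nlia.
  by have -> : run_start B iB + run_len B iB - run_len A iA + run_len A iA = run_start B iB + run_len B iB by nlia.
- by apply/andP; split; nlia.
- nlia.
Qed.


Fixpoint rtake (d : nat) (s : rle T) : rle T :=
  match s with
  | [::] => [::]
  | r :: s' => if d <= r.2 then (if d is 0 then [::] else [:: (r.1, d)])
               else r :: rtake (d - r.2) s'
  end.

Lemma decode_rtake d s : decode (rtake d s) = take d (decode s).
Proof.
elim: s d => [|r s IH] d /=; first by case: d.
rewrite decode_cons; case: ifP => Hd.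
  rewrite takel_cat ?size_nseq // take_nseq //.
  by case: d Hd => [|d] //= _; rewrite decode_cons cats0.
rewrite take_cat size_nseq ifF; last by apply/negbTE; rewrite -leqNgt ltnW // ltnNge Hd.
  by rewrite decode_cons IH.
Qed.

Lemma size_rtake d s : size (rtake d s) <= size s.
Proof.
elim: s d => [|r s IH] d //=; case: ifP => _; last by rewrite ltnS.
by case: d.
Qed.

Lemma path_rtake d s (x : T * nat) :
  path (fun r1 r2 => C r1 != C r2) x s -> path (fun r1 r2 => C r1 != C r2) x (rtake d s).
Proof.
elim: s d x => [|r s IH] d x //=; case/andP=> H1 H2; case: ifP => _.
  by case: d => //= d; rewrite andbT.
by rewrite /= H1 IH.
Qed.

Lemma rtake_rle d s : is_rle s -> is_rle (rtake d s).
Proof.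
case: s => [|r s] // /andP[Hpos Hs] /=.
move: Hpos => /= /andP[Hr Hpos].
case: ifP => Hd.
  by case: d Hd.
apply/andP; split.
  rewrite /= Hr /=.
  elim: s (d - r.2) Hpos {Hs Hd} => [|r' s IH] d' //= /andP[H1 H2].
  case: ifP => _; first by case: d'.
  by rewrite /= H1 IH.
exact: path_rtake.
Qed.

Lemma rle_head (c : T) k k' (rest : rle T) : is_rle ((c,k)::rest) -> 0 < k' ->
  is_rle ((c,k')::rest).
Proof.
case/andP => /= /andP[_ H1] H2 Hk; rewrite /is_rle /= Hk H1 /=.
by case: rest H1 H2.
Qed.

End H.

Theorem proposition1 (T : eqType) (A B : rle T) (n dt : nat) (iA iB : 'I_n) :
  is_rle A -> is_rle B -> size A = n -> size B = n -> 0 < dt ->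
  (witness_pair A B n dt iA iB <->
   exists s : rle T,
     [/\ is_rle s, size (decode s) = dt, size s ^ 3 < n &
       exists pA pB,
         [/\ occurs_at (decode s) (decode A) pA && in_run A iA pA,
             occurs_at (decode s) (decode B) pB && in_run B iB pB,
             run_len A iA <= run_len B iB -> pA = run_start A iA &
             run_len B iB <= run_len A iA -> pB = run_start B iB]]).
Proof.
move=> HA HB SA SB Hdt.
have HiA : iA < size A by rewrite SA ltn_ord.
have HiB : iB < size B by rewrite SB ltn_ord.
split; last first.
  case=> s [Hs Hd Hsz [pA [pB [O1 O2 _ _]]]].
  by exists s; split => //; [rewrite Hd | exists pA | exists pB].
case=> s [Hs Hd Hsz [pA /andP[OA InA]] [pB /andP[OB InB]]].
case: s Hs Hd Hsz OA OB => [|[c k] rest] Hs Hd Hsz OA OB.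
  by move: Hd; rewrite /decode /= leqn0 => /eqP Hd0; rewrite Hd0 in Hdt.
have Hk : 0 < k by move: Hs => /andP[/= /andP[]].
have Hfin : forall k', k <= k' ->
  [/\ is_rle (rtake dt ((c,k')::rest)), size (decode (rtake dt ((c,k')::rest))) = dt,
      size (rtake dt ((c,k')::rest)) ^ 3 < n &
      forall X p, occurs_at (decode ((c,k')::rest)) X p ->
        occurs_at (decode (rtake dt ((c,k')::rest))) X p].
  move=> k' Hkk; split.
  - by apply: rtake_rle; apply: (rle_head Hs); nlia.
  - rewrite decode_rtake size_take_min; move: Hd; rewrite !decode_cons2 !size_cat !size_nseq; nlia.
  - apply: leq_ltn_trans Hsz; rewrite leq_exp2r //.
    exact: (size_rtake dt ((c,k')::rest)).
  - by move=> X p H; rewrite decode_rtake; apply: (occ_take c).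
case: (leqP (run_len A iA) (run_len B iB)) => Hl.
  have [k' [Hkk OA' InA' [pB' [OB' InB' Heq]]]] :=
    core (c,0) HA HB HiA HiB Hs OA InA OB InB Hl.
  have [H1 H2 H3 H4] := Hfin k' Hkk.
  exists (rtake dt ((c,k')::rest)); split => //.
  exists (run_start A iA), pB'; split => //.
  - by rewrite H4.
  - by rewrite H4.
have [k' [Hkk OB' InB' [pA' [OA' InA' Heq]]]] :=
  core (c,0) HB HA HiB HiA Hs OB InB OA InA (ltnW Hl).
have [H1 H2 H3 H4] := Hfin k' Hkk.
exists (rtake dt ((c,k')::rest)); split => //.
exists pA', (run_start B iB); split => //.
- by rewrite H4.
- by rewrite H4.
Qed.
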